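(* Let $J\ge5$ be an integer and let $n$ be an integer with $n\not\equiv0\pmod{2^{J-1}}$. Then $n=a+b$ for some integers $a,b$ with $a\equiv2^i\pmod{2^{i+2}}$ and $b\equiv2^j\pmod{2^{j+2}}$ for some integers $0\le i,j\le J-3$. *)

(* Defs.v *)
From Stdlib Require Import ZArith.
Open Scope Z_scope.

(* Main.v *)
Require Import Defs.
From Stdlib Require Import ZArith Lia.
Open Scope Z_scope.

Lemma val_decomp : forall t, 0 <= t -> forall n, n mod 2 ^ (t + 1) <> 0 ->
  exists v m, 0 <= v <= t /\ n = 2 ^ v * (2 * m + 1).
Proof.
  intros t Ht; pattern t; apply natlike_ind; auto; clear t Ht.
  - intros n Hn. exists 0, (n / 2). split; [lia|].
    change (2 ^ (0 + 1)) with 2 in Hn. change (2 ^ 0) with 1. pose proof (Z.div_mod n 2 ltac:(lia)). pose proof (Z.mod_pos_bound n 2 ltac:(lia)). lia.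
  - intros t Ht IH n Hn.
    pose proof (Z.div_mod n 2 ltac:(lia)). pose proof (Z.mod_pos_bound n 2 ltac:(lia)).
    destruct (Z.eq_dec (n mod 2) 0) as [E|E].
    + assert (Hn' : (n / 2) mod 2 ^ (t + 1) <> 0).
      { intro C. apply Hn.
        replace (Z.succ t + 1) with (1 + (t + 1)) by lia.
        rewrite Z.pow_add_r by lia.
        replace n with (2 * (n / 2)) at 1 by lia.
        rewrite Z.mul_mod_distr_l; try lia. }
      destruct (IH _ Hn') as [v [m [Hv Hm]]].
      exists (v + 1), m. split; [lia|].
      rewrite Z.pow_add_r by lia. lia.
    + exists 0, (n / 2). split; [lia|]. change (2 ^ 0) with 1. lia.
Qed.

Lemma modgood : forall i m, 0 <= i ->
  (2 ^ i * (4 * m + 1)) mod 2 ^ (i + 2) = 2 ^ i mod 2 ^ (i + 2).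
Proof.
  intros i m Hi. rewrite Z.pow_add_r by lia.
  replace (2 ^ i * (4 * m + 1)) with (2 ^ i + m * (2 ^ i * 2 ^ 2)) by ring.
  apply Z.mod_add. pose proof (Z.pow_pos_nonneg 2 i). simpl. lia.
Qed.

Theorem lemma1 (J n : Z) (hJ : 5 <= J)
  (hn : n mod (2 ^ (J - 1)) <> 0) :
  exists a b i j : Z,
    n = a + b /\
    0 <= i <= J - 3 /\ 0 <= j <= J - 3 /\
    a mod (2 ^ (i + 2)) = 2 ^ i mod (2 ^ (i + 2)) /\
    b mod (2 ^ (j + 2)) = 2 ^ j mod (2 ^ (j + 2)).
Proof.
  replace (J - 1) with ((J - 2) + 1) in hn by lia.
  destruct (val_decomp (J - 2) ltac:(lia) n hn) as [v [m [Hv Hm]]].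
  destruct (Z.eq_dec v 0) as [E|E].
  - subst v. rewrite Z.pow_0_r in Hm.
    pose proof (Z.div_mod m 2 ltac:(lia)). pose proof (Z.mod_pos_bound m 2 ltac:(lia)).
    destruct (Z.eq_dec (m mod 2) 0) as [E2|E2].
    + exists (2 ^ 0 * (4 * (m / 2 - 1) + 1)), (2 ^ 2 * (4 * 0 + 1)), 0, 2.
      split; [change (2 ^ 0) with 1; change (2 ^ 2) with 4; lia|]. split; [lia|]. split; [lia|].
      split; apply modgood; lia.
    + exists (2 ^ 0 * (4 * (m / 2) + 1)), (2 ^ 1 * (4 * 0 + 1)), 0, 1.
      split; [change (2 ^ 0) with 1; change (2 ^ 1) with 2; lia|]. split; [lia|]. split; [lia|].
      split; apply modgood; lia.
  - exists (2 ^ (v - 1) * (4 * m + 1)), (2 ^ (v - 1) * (4 * 0 + 1)), (v - 1), (v - 1).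
    split.
    + rewrite Hm. replace v with ((v - 1) + 1) at 1 by lia.
      rewrite Z.pow_add_r by lia. ring.
    + split; [lia|]. split; [lia|]. split; apply modgood; lia.
Qed.
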